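(* Let $m\ge 2$ and let $B$ be a blocker in $CK(2m)$. Then there exist an integer $a$ and an integer $t$ with $2\le t\le m$ such that the set of boundary edges of $B$ is exactly $\{[a,a+1],[a+1,a+2],\dots,[a+t-1,a+t]\}$ (labels modulo $2m$); i.e., the boundary edges of $B$ form a path of length $t$ along the boundary of the polygon.
   Context: $CK(2m)$ denotes the complete convex geometric graph whose vertices are the $2m$ vertices of a convex polygon, labelled cyclically $0,1,\dots,2m-1$ (labels modulo $2m$), and whose edges are all straight segments between pairs of vertices. Two edges with four distinct endpoints cross iff their endpoints alternate in the cyclic order. A simple perfect matching (SPM) is a set of $m$ edges that are pairwise disjoint (no common endpoint and no crossing). A blocking set is a set of edges containing at least one edge of every SPM. A blocker is a blocking set with exactly $m$ edges. Boundary edges are the edges $[i,i+1]$. *)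

(* Defs.v *)
From mathcomp Require Import all_boot.
Set Implicit Arguments. Unset Strict Implicit. Unset Printing Implicit Defensive.

(* Vertices of CK(n) are 'I_n, labelled cyclically 0..n-1 (n = 2m).
   An edge is a 2-element set of vertices (a straight segment). *)
Definition is_edge n (e : {set 'I_n}) : bool := #|e| == 2.

(* Two edges with four distinct endpoints cross iff their endpoints
   alternate in the cyclic order; with linear labels 0..n-1 this means
   e = {a,b}, f = {c,d} with a < c < b < d (up to swapping e and f). *)
Definition alternate n (e f : {set 'I_n}) : bool :=
  [exists a : 'I_n, exists b : 'I_n, exists c : 'I_n, exists d : 'I_n,
     [&& e == [set a; b], f == [set c; d], a < c, c < b & b < d]].

Definition crossing n (e f : {set 'I_n}) : bool := alternate e f || alternate f e.

Definition edges_disjoint n (e f : {set 'I_n}) : bool :=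
  [disjoint e & f] && ~~ crossing e f.

Definition is_SPM m (M : {set {set 'I_(2 * m)}}) : bool :=
  [&& [forall e in M, is_edge e], #|M| == m &
      [forall e in M, forall f in M, (e != f) ==> edges_disjoint e f]].

Definition is_blocking_set m (B : {set {set 'I_(2 * m)}}) : Prop :=
  (forall e, e \in B -> is_edge e) /\
  (forall M, is_SPM M -> exists2 e, e \in B & e \in M).

Definition is_blocker m (B : {set {set 'I_(2 * m)}}) : Prop :=
  is_blocking_set B /\ #|B| = m.

Definition bedge n (i : 'I_n) : {set 'I_n} := [set i; ordS i].

Definition is_boundary n (e : {set 'I_n}) : bool := [exists i : 'I_n, e == bedge i].

Definition vshift n (a : 'I_n) (k : nat) : 'I_n := iter k (@ordS n) a.

(* Main.v *)
From Stdlib Require Import Lia.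
Require Import Defs.
From mathcomp Require Import all_boot.
Set Implicit Arguments. Unset Strict Implicit. Unset Printing Implicit Defensive.

Ltac unval :=
  repeat match goal with
  | H : context [@isSub.val_subdef nat _ _ _ ?x] |- _ => change (@isSub.val_subdef nat _ _ _ x) with (nat_of_ord x) in H
  | |- context [@isSub.val_subdef nat _ _ _ ?x] => change (@isSub.val_subdef nat _ _ _ x) with (nat_of_ord x)
  end.

Ltac split_ifs :=
  repeat match goal with
  | |- context [if ?c then _ else _] =>
      lazymatch c with
      | context [if _ then _ else _] => fail
      | _ => let h := fresh "hif" in case: (boolP c) => h
      end
  end.

Ltac mlia := unval;
  repeat match goal with
  | H : ?b = true |- _ => change (is_true b) in H
  | H : is_true (_ < _) |- _ => move/ltP: H => H
  | H : is_true (_ <= _) |- _ => move/leP: H => H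
  | H : is_true (@eq_op _ ?x _) |- _ => lazymatch type of x with nat => move/eqP: H => H end
  | H : is_true (~~ (@eq_op _ ?x _)) |- _ => lazymatch type of x with nat => move/eqP: H => H end
  | H : is_true (~~ (_ < _)) |- _ => rewrite -leqNgt in H
  | H : is_true (~~ (_ <= _)) |- _ => rewrite -ltnNge in H
  | H : (_ < _) = false |- _ => move/negbT: H => H
  | H : (_ <= _) = false |- _ => move/negbT: H => H
  | H : (@eq_op _ ?x _) = false |- _ => lazymatch type of x with nat => move/negbT: H => H end
  | H : is_true (_ && _) |- _ => case/andP: H => ? ?
  end;
  try match goal with
  | |- is_true (_ < _) => apply/ltP
  | |- is_true (_ <= _) => apply/leP
  | |- is_true (@eq_op _ _ _) => apply/eqP
  | |- is_true (~~ (@eq_op _ _ _)) => apply/eqP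
  end;
  try unfold addn, subn, muln in * ; lia.

Ltac blia_goal :=
  lazymatch goal with
  | |- is_true (_ && _) => apply/andP; split; blia_core
  | |- @eq bool _ _ => apply/idP/idP => ?; blia_core
  | |- is_true (~~ _) => apply/negP => ?; blia_core
  | |- is_true true => done
  | |- is_true false => exfalso; mlia
  | _ => mlia
  end
with blia_core :=
  repeat match goal with
  | H : is_true (_ || _) |- _ => case/orP: H => H
  | H : is_true (~~ (_ || _)) |- _ => rewrite negb_or in H
  | H : is_true (~~ (_ && _)) |- _ => rewrite negb_and in H
  | H : is_true true |- _ => clear H
  end;
  try (match goal with H : is_true false |- _ => discriminate H end);
  blia_goal.

Ltac blia := split_ifs; simpl; intros; blia_core.

Definition btw (a b x : nat) := (a < x < b) || (b < x < a).
Definition crX (a b c d : nat) :=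
  [&& a != c, a != d, b != c, b != d & btw a b c (+) btw a b d].

Lemma crX_sorted a b c d : a < b -> c < d ->
  crX a b c d = [&& a < c, c < b & b < d] || [&& c < a, a < d & d < b].
Proof.
move=> ab cd; rewrite /crX /btw.
case: (ltngtP a c) => h1; case: (ltngtP a d) => h2;
case: (ltngtP b c) => h3; case: (ltngtP b d) => h4;
rewrite ?ab ?cd /= ?andbT ?andbF ?orbF //; try (exfalso; mlia).
all: try (rewrite ?(ltnW ab) ?(ltnW cd) //=; done).
Qed.

Lemma btwC a b x : btw a b x = btw b a x.
Proof. by rewrite /btw orbC. Qed.

Lemma crX_swap1 a b c d : crX a b c d = crX b a c d.
Proof.
rewrite /crX (btwC a b c) (btwC a b d); case: (a != c); case: (a != d); case: (b != c); case: (b != d) => //=.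
Qed.

Lemma crX_swap2 a b c d : crX a b c d = crX a b d c.
Proof.
rewrite /crX; case: (a != c); case: (a != d); case: (b != c); case: (b != d) => //=;
by rewrite addbC.
Qed.

Lemma set2C (T : finType) (a b : T) : [set a; b] = [set b; a].
Proof. by apply/setP => x; rewrite !inE orbC. Qed.

Lemma imset_set2 (T U : finType) (f : T -> U) (a b : T) : f @: [set a; b] = [set f a; f b].
Proof. by rewrite imsetU1 imset_set1. Qed.

Lemma alternateE n (a b c d : 'I_n) : a < b -> c < d ->
  alternate [set a; b] [set c; d] = [&& a < c, c < b & b < d].
Proof.
move=> ab cd; apply/idP/idP.
- case/existsP=> a' /existsP[b' /existsP[c' /existsP[d' /and5P[/eqP e1 /eqP e2 h1 h2 h3]]]].
  have ha : (a' == a) || (a' == b) by rewrite -in_set2 e1 !inE eqxx.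
  have hb : (b' == a) || (b' == b) by rewrite -in_set2 e1 !inE eqxx orbT.
  have hc : (c' == c) || (c' == d) by rewrite -in_set2 e2 !inE eqxx.
  have hd : (d' == c) || (d' == d) by rewrite -in_set2 e2 !inE eqxx orbT.
  by case/orP: ha => /eqP ?; case/orP: hb => /eqP ?; case/orP: hc => /eqP ?;
    case/orP: hd => /eqP ?; subst; apply/and3P; split; mlia.
- move=> H; apply/existsP; exists a; apply/existsP; exists b; apply/existsP; exists c;
  apply/existsP; exists d; by rewrite !eqxx.
Qed.

Lemma crossingE n (a b c d : 'I_n) : a != b -> c != d ->
  crossing [set a; b] [set c; d] = crX a b c d.
Proof.
wlog ab : a b / a < b.
  move=> W nab ncd; case: (ltngtP a b) => h; first exact: W.
  - by rewrite set2C crX_swap1; apply: W => //; rewrite eq_sym.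
  - by move/eqP: nab; case; apply: val_inj.
move=> _; wlog cd : c d / c < d.
  move=> W ncd; case: (ltngtP c d) => h; first exact: W.
  - by rewrite (set2C c) crX_swap2; apply: W => //; rewrite eq_sym.
  - by move/eqP: ncd; case; apply: val_inj.
move=> _; rewrite /crossing !alternateE // crX_sorted //.
Qed.

Lemma btw_aa a x : btw a a x = false.
Proof. rewrite /btw; case: (ltnP a x) => h //=; by rewrite ltnNge ltnW. Qed.

Lemma crX_S a b c d : crX a.+1 b.+1 c.+1 d.+1 = crX a b c d.
Proof. by rewrite /crX /btw !ltnS !eqSS. Qed.

Lemma crX_wrap1 a b c d : b < a -> c < a -> d < a ->
  crX 0 b.+1 c.+1 d.+1 = crX a b c d.
Proof.
move=> hb hc hd.
have ab : (a == b) = false by apply/eqP; mlia.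
have ac : (a == c) = false by apply/eqP; mlia.
have ad : (a == d) = false by apply/eqP; mlia.
have ab' : (a < b) = false by apply/negbTE; rewrite -leqNgt ltnW.
have ac' : (a < c) = false by apply/negbTE; rewrite -leqNgt ltnW.
have ad' : (a < d) = false by apply/negbTE; rewrite -leqNgt ltnW.
rewrite /crX /btw !ltnS !eqSS ?ltn0Sn ?ltn0 ?leq0n /= ?ab ?ac ?ad ?ab' ?ac' ?ad' ?hb ?hc ?hd /=.
case: (ltngtP b c) => h1; case: (ltngtP b d) => h2; case: (ltngtP c d) => h3;
rewrite /= ?andbT ?andbF ?orbF //; try (exfalso; mlia).
Qed.

Lemma crX_wrap3 a b c d : a < c -> b < c -> d < c ->
  crX a.+1 b.+1 0 d.+1 = crX a b c d.
Proof.
move=> ha hb hd.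
have ca : (c == a) = false by apply/eqP; mlia.
have cb : (c == b) = false by apply/eqP; mlia.
have cd : (c == d) = false by apply/eqP; mlia.
have ac : (a == c) = false by apply/eqP; mlia.
have bc : (b == c) = false by apply/eqP; mlia.
have ca' : (c < a) = false by apply/negbTE; rewrite -leqNgt ltnW.
have cb' : (c < b) = false by apply/negbTE; rewrite -leqNgt ltnW.
rewrite /crX /btw !ltnS !eqSS ?ltn0Sn ?ltn0 ?leq0n /= ?ca ?cb ?cd ?ac ?bc ?ca' ?cb' ?ha ?hb ?hd /=.
case: (ltngtP a b) => h1; case: (ltngtP a d) => h2; case: (ltngtP b d) => h3;
rewrite /= ?andbT ?andbF ?orbF //; try (exfalso; mlia).
Qed.

Lemma modS_small n x : x < n -> x.+1 %% n = if x.+1 == n then 0 else x.+1.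
Proof.
move=> h; case: eqP => [->|ne]; first by rewrite modnn.
by rewrite modn_small //; rewrite ltn_neqAle h andbT; apply/eqP.
Qed.

Lemma crX_rot n a b c d : a < n -> b < n -> c < n -> d < n ->
  crX (a.+1 %% n) (b.+1 %% n) (c.+1 %% n) (d.+1 %% n) = crX a b c d.
Proof.
move=> ha hb hc hd; rewrite !modS_small //.
case: (eqVneq a.+1 n) => ea; case: (eqVneq b.+1 n) => eb;
case: (eqVneq c.+1 n) => ec; case: (eqVneq d.+1 n) => ed.
all: try (have eab : a = b by mlia); try (have eac : a = c by mlia);
  try (have ead : a = d by mlia); try (have ebc : b = c by mlia);
  try (have ebd : b = d by mlia); try (have ecd : c = d by mlia).
all: try by rewrite /crX ?eab ?eac ?ead ?ebc ?ebd ?ecd ?eqxx ?btw_aa ?addbb /= ?andbF.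
all: first [ by rewrite crX_S | (apply: crX_wrap1; mlia) | (apply: crX_wrap3; mlia)
  | (rewrite crX_swap1 [RHS]crX_swap1; apply: crX_wrap1; mlia)
  | (rewrite crX_swap2 [RHS]crX_swap2; apply: crX_wrap3; mlia) ].
Qed.

Lemma edgeP n (e : {set 'I_n}) : is_edge e -> exists a b : 'I_n, a != b /\ e = [set a; b].
Proof. by move/cards2P. Qed.

Lemma crossingC n (e f : {set 'I_n}) : crossing e f = crossing f e.
Proof. by rewrite /crossing orbC. Qed.

Lemma edges_disjointC n (e f : {set 'I_n}) : edges_disjoint e f = edges_disjoint f e.
Proof. by rewrite /edges_disjoint disjoint_sym crossingC. Qed.

Section Maps.
Variables (n n' : nat) (phi : 'I_n -> 'I_n').
Hypothesis phi_inj : injective phi.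
Hypothesis phi_cr : forall a b c d, crX (phi a) (phi b) (phi c) (phi d) = crX a b c d.

Definition mapE (M : {set {set 'I_n}}) : {set {set 'I_n'}} := [set phi @: e | e : {set 'I_n} in M].

Lemma map_edge (e : {set 'I_n}) : is_edge (phi @: e) = is_edge e.
Proof. by rewrite /is_edge card_imset. Qed.

Lemma map_cross (e f : {set 'I_n}) : is_edge e -> is_edge f -> crossing (phi @: e) (phi @: f) = crossing e f.
Proof.
case/edgeP=> a [b [ab ->]]; case/edgeP=> c [d [cd ->]].
rewrite !imset_set2 !crossingE ?phi_cr //; by rewrite (inj_eq phi_inj).
Qed.

Lemma map_edisj (e f : {set 'I_n}) : is_edge e -> is_edge f ->
  edges_disjoint (phi @: e) (phi @: f) = edges_disjoint e f.
Proof. by move=> he hf; rewrite /edges_disjoint map_cross // imset_disjoint. Qed.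

Lemma mapE_mem M (e : {set 'I_n}) : (phi @: e \in mapE M) = (e \in M).
Proof. by rewrite mem_imset //; apply: imset_inj. Qed.

Lemma mapE_card M : #|mapE M| = #|M|.
Proof. by rewrite card_imset //; apply: imset_inj. Qed.

End Maps.

Lemma map_SPM m (phi : 'I_(2 * m) -> 'I_(2 * m)) : injective phi ->
  (forall a b c d, crX (phi a) (phi b) (phi c) (phi d) = crX a b c d) ->
  forall M, is_SPM M -> is_SPM (mapE phi M).
Proof.
move=> inj cr M /and3P[/forall_inP he /eqP hc /forall_inP hd].
apply/and3P; split.
- by apply/forall_inP => _ /imsetP[e eM ->]; rewrite map_edge //; apply: he.
- by rewrite mapE_card // hc.
- apply/forall_inP => _ /imsetP[e eM ->]; apply/forall_inP => _ /imsetP[f fM ->].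
  apply/implyP => nef; rewrite map_edisj //; try by apply: he.
  move/forall_inP: (hd e eM) => /(_ f fM) /implyP; apply.
  by apply: contra nef => /eqP ->.
Qed.

Definition rs n (s : nat) (x : 'I_n) : 'I_n := vshift x s.

Lemma rs_val n s (x : 'I_n) : val (rs s x) = (x + s) %% n.
Proof.
elim: s => [|s IH]; first by rewrite addn0 modn_small.
rewrite /rs /vshift iterS /= -/(vshift x s) -/(rs s x) IH.
by rewrite -addn1 modnDml addn1 addnS.
Qed.

Lemma rs_inj n s : injective (@rs n s).
Proof.
move=> x y /(congr1 val); rewrite !rs_val => /eqP.
rewrite eqn_modDr !modn_small // => /eqP h; exact: val_inj.
Qed.

Lemma rsS n s (x : 'I_n) : rs s.+1 x = ordS (rs s x).
Proof. by []. Qed.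

Lemma rs_ordS n s (x : 'I_n) : rs s (ordS x) = ordS (rs s x).
Proof. by rewrite /rs /vshift -iterSr iterS. Qed.

Lemma rs_add n s t (x : 'I_n) : rs s (rs t x) = rs (s + t) x.
Proof. by rewrite /rs /vshift iterD. Qed.

Lemma rs_to n (x y : 'I_n) : exists s, rs s x = y.
Proof.
exists (y + n - x); apply: val_inj; rewrite rs_val /=.
rewrite addnBA; last by rewrite ltnW // ltn_addl.
by rewrite addKn modnDr modn_small.
Qed.

Lemma rs_cr n s (a b c d : 'I_n) : crX (rs s a) (rs s b) (rs s c) (rs s d) = crX a b c d.
Proof.
elim: s => [|s IH] //; rewrite !rsS /= crX_rot //.
Qed.

Lemma rs_bedge n s (i : 'I_n) : rs s @: bedge i = bedge (rs s i).
Proof. by rewrite /bedge imset_set2 rs_ordS. Qed.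

Lemma rs_back n s (x : 'I_n) : rs (s * n - s) (rs s x) = x.
Proof.
have n0 : 0 < n by apply: leq_ltn_trans (ltn_ord x).
apply: val_inj; rewrite rs_add rs_val /= subnK; last by rewrite leq_pmulr.
by rewrite addnC modnMDl modn_small.
Qed.

Lemma rs_back' n s (x : 'I_n) : rs s (rs (s * n - s) x) = x.
Proof. by rewrite rs_add addnC -rs_add rs_back. Qed.

Lemma mapE_comp n (f g : 'I_n -> 'I_n) M : mapE f (mapE g M) = mapE (f \o g) M.
Proof.
apply/setP => E; apply/imsetP/imsetP => [[e' /imsetP[e eM ->] ->]|[e eM ->]].
- by exists e => //; rewrite -imset_comp.
- by exists (g @: e); [apply: imset_f | rewrite -imset_comp].
Qed.

Lemma mapE_id n (f : 'I_n -> 'I_n) M : f =1 id -> mapE f M = M.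
Proof.
move=> hf; rewrite /mapE (eq_imset _ (fun e : {set 'I_n} => _ : f @: e = e)) ?imset_id //.
by move=> e; rewrite (eq_imset _ hf) imset_id.
Qed.

Lemma rot_blocking m s (B : {set {set 'I_(2 * m)}}) :
  is_blocking_set B -> is_blocking_set (mapE (rs s) B).
Proof.
case=> he hb; split.
  by move=> _ /imsetP[e eB ->]; rewrite map_edge ?he //; apply: rs_inj.
move=> M hM.
have hM0 : is_SPM (mapE (rs (s * (2 * m) - s)) M).
  by apply: map_SPM => //; [apply: rs_inj | move=> *; apply: rs_cr].
case: (hb _ hM0) => e eB eM0; exists (rs s @: e); first by rewrite mapE_mem //; apply: rs_inj.
have <- : mapE (rs s) (mapE (rs (s * (2 * m) - s)) M) = M.
  by rewrite mapE_comp mapE_id // => x /=; apply: rs_back'.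
by rewrite mapE_mem //; apply: rs_inj.
Qed.

Lemma rot_blocker m s (B : {set {set 'I_(2 * m)}}) :
  is_blocker B -> is_blocker (mapE (rs s) B).
Proof.
by case=> hb hc; split; [apply: rot_blocking | rewrite mapE_card //; apply: rs_inj].
Qed.

Definition SI n (B : {set {set 'I_n}}) := [set i | bedge i \in B].

Lemma SI_rs n s (B : {set {set 'I_n}}) i :
  (rs s i \in SI (mapE (rs s) B)) = (i \in SI B).
Proof. by rewrite !inE -rs_bedge mapE_mem //; apply: rs_inj. Qed.

Lemma le2k k : 2 * k <= 2 * k.+1.
Proof. by rewrite leq_mul2l leqnSn orbT. Qed.

Definition W k : 'I_(2 * k) -> 'I_(2 * k.+1) := widen_ord (le2k k).
Arguments W {k}.

Lemma W_inj k : injective (@W k).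
Proof. by move=> x y /(congr1 val) /= h; apply: val_inj. Qed.

Lemma W_cr k (a b c d : 'I_(2 * k)) : crX (@W k a) (@W k b) (@W k c) (@W k d) = crX a b c d.
Proof. by []. Qed.

Lemma hi1_proof k : 2 * k < 2 * k.+1. Proof. rewrite mulnS; mlia. Qed.
Lemma hi2_proof k : (2 * k).+1 < 2 * k.+1. Proof. rewrite mulnS; mlia. Qed.
Definition hi1 k : 'I_(2 * k.+1) := Ordinal (hi1_proof k).
Definition hi2 k : 'I_(2 * k.+1) := Ordinal (hi2_proof k).
Definition top k := [set hi1 k; hi2 k].

Lemma W_lt k (x : 'I_(2 * k)) : @W k x < 2 * k.
Proof. exact (ltn_ord x). Qed.

Lemma topNmap k (M : {set {set 'I_(2 * k)}}) : top k \notin mapE (@W k) M.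
Proof.
apply/negP => /imsetP[e _ he].
have : hi1 k \in W @: e by rewrite -he !inE eqxx.
case/imsetP=> x _ /(congr1 val) /= hx; move: (ltn_ord x) => ?; mlia.
Qed.

Lemma top_edge k : is_edge (top k).
Proof. rewrite /is_edge cards2; case: (hi1 k =P hi2 k) => [/(congr1 val) /= ?|//]; exfalso; mlia. Qed.

Lemma top_edisj k (f : {set 'I_(2 * k)}) : is_edge f -> edges_disjoint (top k) (W @: f).
Proof.
case/edgeP=> c [d [cd ->]]; rewrite imset_set2 /edges_disjoint.
apply/andP; split.
- rewrite disjoints_subset; apply/subsetP => x; rewrite !inE => /orP[] /eqP -> ;
  apply/negP => /orP[] /eqP /(congr1 val) /= ?; move: (ltn_ord c) (ltn_ord d) => ? ?; mlia.
- rewrite crossingE; last by rewrite (inj_eq (@W_inj k)).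
    rewrite /crX /btw /= ; move: (ltn_ord c) (ltn_ord d) => hc hd.
    have h1 : (2 * k < c) = false by apply/negbTE; rewrite -leqNgt ltnW.
    have h2 : (2 * k < d) = false by apply/negbTE; rewrite -leqNgt ltnW.
    have h3 : ((2 * k).+1 < c) = false by apply/negbTE; rewrite -leqNgt ltnW // ltnW.
    have h4 : ((2 * k).+1 < d) = false by apply/negbTE; rewrite -leqNgt ltnW // ltnW.
    by rewrite h1 h2 h3 h4 /= !andbF.
  by apply/eqP => /(congr1 val) /=; mlia.
Qed.

Lemma SPM_widen k (M : {set {set 'I_(2 * k)}}) : is_SPM M -> is_SPM (top k |: mapE (@W k) M).
Proof.
move=> /and3P[/forall_inP he /eqP hc /forall_inP hd].
have heM : forall E, E \in top k |: mapE (@W k) M -> is_edge E.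
  move=> E; rewrite in_setU1 => /orP[/eqP ->|/imsetP[e eM ->]]; first exact: top_edge.
  by rewrite map_edge ?he //; apply: W_inj.
apply/and3P; split.
- by apply/forall_inP.
- by rewrite cardsU1 topNmap mapE_card ?hc //; apply: W_inj.
- apply/forall_inP => E; rewrite in_setU1 => /orP[/eqP ->|/imsetP[e eM ->]];
  apply/forall_inP => F; rewrite in_setU1 => /orP[/eqP ->|/imsetP[f fM ->]];
  apply/implyP => nEF.
  + by rewrite eqxx in nEF.
  + by apply: top_edisj; apply: he.
  + by rewrite edges_disjointC; apply: top_edisj; apply: he.
  + rewrite map_edisj ?he //; try exact: W_inj.
    move/forall_inP: (hd e eM) => /(_ f fM) /implyP; apply.
    by apply: contra nEF => /eqP ->.
Qed.

Definition pull k (B : {set {set 'I_(2 * k.+1)}}) : {set {set 'I_(2 * k)}} :=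
  [set e : {set 'I_(2 * k)} | W @: e \in B].

Lemma pull_blocking k (B : {set {set 'I_(2 * k.+1)}}) :
  is_blocking_set B -> top k \notin B -> is_blocking_set (pull B).
Proof.
case=> he hb ntop; split.
- move=> e; rewrite inE => /he; rewrite map_edge //; exact: W_inj.
- move=> M hM; case: (hb _ (SPM_widen hM)) => E EB.
  rewrite in_setU1 => /orP[/eqP Etop|/imsetP[e eM Ee]].
  + by rewrite -Etop EB in ntop.
  + by exists e => //; rewrite inE -Ee.
Qed.

Lemma card_split (T : finType) (A : {set T}) (P : pred T) :
  #|A| = #|[set x in A | P x]| + #|[set x in A | ~~ P x]|.
Proof.
rewrite -(cardsID [set x | P x] A); congr (_ + _); apply: eq_card => x;
by rewrite !inE // andbC.
Qed.

Lemma pull_card k (B : {set {set 'I_(2 * k.+1)}}) :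
  #|B| = #|pull B| + #|[set e in B | (hi1 k \in e) || (hi2 k \in e)]|.
Proof.
rewrite (card_split B (fun e : {set 'I_(2 * k.+1)} => ~~ ((hi1 k \in e) || (hi2 k \in e)))).
congr (_ + _); last by apply: eq_card => e; rewrite !inE negbK.
rewrite -(mapE_card (@W_inj k) (pull B)); apply: eq_card => E.
apply/idP/imsetP => [|[e]].
2: { move=> eB ->; rewrite inE in eB; rewrite inE eB /=; apply/negP => /orP[] /imsetP[x _] /(congr1 val) /= hx;
  move: (ltn_ord x) => ?; mlia. }
rewrite inE => /andP[EB nt].
have hE : E = W @: [set x | W x \in E].
  apply/setP => y; apply/idP/imsetP => [yE|[x]]; last by rewrite inE => h ->.
  have hy : y < 2 * k.
    have e2 : 2 * k.+1 = (2 * k).+2 by rewrite mulnS; mlia.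
    have hy : (y : nat) < (2 * k).+2 := leq_trans (ltn_ord y) (eq_leq e2).
    case: (ltnP y (2 * k)) => // hge; exfalso.
    case: (ltnP y (2 * k).+1) => h2.
    + by move/negP: nt; apply; apply/orP; left; have <- : y = hi1 k by apply: val_inj => /=; mlia.
    + by move/negP: nt; apply; apply/orP; right; have <- : y = hi2 k by apply: val_inj => /=; mlia.
  by exists (Ordinal hy); [rewrite inE; have -> : W (Ordinal hy) = y by apply: val_inj | apply: val_inj].
by exists [set x | W x \in E]; rewrite // inE -hE.
Qed.

Lemma mod2 n x : x < 2 * n -> x %% n = if x < n then x else x - n.
Proof.
move=> h; case: ltnP => hx; first by rewrite modn_small.
have -> : x = (x - n) + n by rewrite subnK.
by rewrite modnDr modn_small ?addnK //; mlia.
Qed.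

Lemma ordS2 n (j : 'I_n) : 2 < n -> ordS (ordS j) != j.
Proof.
move=> hn; have -> : ordS (ordS j) = rs 2 j by []. apply/eqP => /(congr1 val); rewrite rs_val.
move: (ltn_ord j) => hj; have h2 : j + 2 < 2 * n by mlia. rewrite (mod2 h2).
case: ifP => h ?; mlia.
Qed.

Lemma bedge_inj n : 2 < n -> injective (@bedge n).
Proof.
move=> hn i j hij.
have : i \in bedge j by rewrite -hij !inE eqxx.
rewrite !inE => /orP[/eqP //|/eqP hi].
have : j \in bedge i by rewrite hij !inE eqxx.
rewrite !inE => /orP[/eqP //|/eqP hj].
by move: (ordS2 j hn); rewrite -hi -hj eqxx.
Qed.

Lemma card_SI n (B : {set {set 'I_n}}) : 2 < n -> #|SI B| <= #|B|.
Proof.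
move=> hn; rewrite -(card_imset _ (bedge_inj hn)); apply: subset_leq_card.
by apply/subsetP => _ /imsetP[i iS ->]; rewrite inE in iS.
Qed.

Lemma run_end n (T : {set 'I_n}) : T != set0 -> T != setT ->
  exists i, i \in T /\ ordS i \notin T.
Proof.
case/set0Pn => i0 i0T nT.
case: (boolP [exists i, (i \in T) && (ordS i \notin T)]).
  by case/existsP => i /andP[h1 h2]; exists i.
rewrite negb_exists => /forallP hall; exfalso; move/negP: nT; apply.
have hs : forall s, rs s i0 \in T.
  elim=> // s IH; rewrite rsS; move: (hall (rs s i0)); rewrite negb_and IH /= negbK //.
apply/eqP/setP => j; rewrite inE; case: (rs_to i0 j) => s <-; exact: hs.
Qed.

Lemma card_filter_map n (phi : 'I_n -> 'I_n) (B : {set {set 'I_n}}) (P : pred {set 'I_n}) :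
  injective phi ->
  #|[set E in mapE phi B | P E]| = #|[set e in B | P (phi @: e)]|.
Proof.
move=> inj; rewrite -(mapE_card inj [set e in B | P (phi @: e)]); apply: eq_card => E.
rewrite inE; apply/andP/imsetP => [[/imsetP[e eB ->] hP]|[e]].
- by exists e => //; rewrite inE eB.
- by rewrite inE => /andP[eB hP] ->; split => //; rewrite mapE_mem.
Qed.

Lemma ordS_hi1 k : ordS (hi1 k) = hi2 k.
Proof. by apply: val_inj => /=; rewrite modn_small // hi2_proof. Qed.

Lemma top_bedge k : top k = bedge (hi1 k).
Proof. by rewrite /bedge ordS_hi1. Qed.

Lemma red_at k (B : {set {set 'I_(2 * k.+1)}}) (u : 'I_(2 * k.+1)) :
  is_blocking_set B -> bedge u \notin B ->
  exists B' : {set {set 'I_(2 * k)}}, is_blocking_set B' /\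
    #|B| = #|B'| + #|[set e in B | (u \in e) || (ordS u \in e)]|.
Proof.
move=> hB nu; case: (rs_to u (hi1 k)) => s hs.
set Bt := mapE (rs s) B.
have hBt : is_blocking_set Bt by apply: rot_blocking.
have ntop : top k \notin Bt.
  by rewrite top_bedge -hs -rs_bedge /Bt mapE_mem //; apply: rs_inj.
exists (pull Bt); split; first exact: pull_blocking.
have -> : #|B| = #|Bt| by rewrite mapE_card //; apply: rs_inj.
rewrite {1}pull_card; congr (_ + _).
rewrite card_filter_map; last exact: rs_inj.
apply: eq_card => e; rewrite !inE -ordS_hi1 -hs -rs_ordS !mem_imset //; exact: rs_inj.
Qed.

Lemma SPM1 (a b : 'I_(2 * 1)) : a != b -> is_SPM [set [set a; b]].
Proof.
move=> ab; apply/and3P; split.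
- by apply/forall_inP => e; rewrite inE => /eqP ->; rewrite /is_edge cards2 ab.
- by rewrite cards1.
- apply/forall_inP => e; rewrite inE => /eqP ->; apply/forall_inP => f; rewrite inE => /eqP ->.
  by rewrite eqxx.
Qed.

Lemma lowerL k : 0 < k -> forall B : {set {set 'I_(2 * k)}}, is_blocking_set B -> k <= #|B|.
Proof.
elim: k => // k IH _; case: k IH => [|k] IH B hB.
- set a : 'I_(2 * 1) := Ordinal (isT : 0 < 2 * 1).
  set b : 'I_(2 * 1) := Ordinal (isT : 1 < 2 * 1).
  case: hB => _ /(_ _ (@SPM1 a b isT)) [e eB _].
  by rewrite card_gt0; apply/set0Pn; exists e.
- have IH' := IH isT.
  rewrite leqNgt; apply/negP => hlt.
  have key : forall u, bedge u \notin B -> (exists2 f, f \in B & (u \in f) || (ordS u \in f)) -> False.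
    move=> u nu [f fB hf]; case: (red_at hB nu) => B' [hB' hc].
    have h1 := IH' B' hB'.
    have h2 : 0 < #|[set e in B | (u \in e) || (ordS u \in e)]|.
      by rewrite card_gt0; apply/set0Pn; exists f; rewrite inE fB.
    rewrite hc in hlt; mlia.
  case: (set_0Vmem B) => [B0|[e eB]].
  + case: (red_at hB (u := ord0)) => [|B' [hB' hc]]; first by rewrite B0 inE.
    have h1 := IH' B' hB'; rewrite B0 cards0 in hc; mlia.
  + case/edgeP: (proj1 hB e eB) => p [q [pq ep]].
    case: (boolP (bedge p \in B)) => hp; last first.
      by apply: (key p hp); exists e => //; rewrite ep !inE eqxx.
    have n2 : 2 < 2 * k.+2 by rewrite mulnS; mlia.
    have hne : SI B != set0 by apply/set0Pn; exists p; rewrite inE.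
    have hnT : SI B != setT.
      apply/negP => /eqP hT; have := card_SI B n2; rewrite hT cardsT card_ord => hc; mlia.
    case: (run_end hne hnT) => i [iS niS].
    rewrite !inE in iS niS.
    by apply: (key (ordS i) niS); exists (bedge i) => //; rewrite !inE eqxx orbT.
Qed.

Lemma star k (B : {set {set 'I_(2 * k.+1)}}) (u : 'I_(2 * k.+1)) :
  0 < k -> is_blocker B -> bedge u \notin B ->
  forall e f, e \in B -> f \in B -> (u \in e) || (ordS u \in e) ->
  (u \in f) || (ordS u \in f) -> e = f.
Proof.
move=> k0 [hB hc] nu e f eB fB he hf.
case: (red_at hB nu) => B' [hB' hc'].
have h1 := lowerL k0 hB'.
have : #|[set e in B | (u \in e) || (ordS u \in e)]| <= 1 by rewrite hc in hc'; mlia.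
move/card_le1_eqP; apply; by rewrite inE ?eB ?fB.
Qed.

Lemma ordS_neq n (x : 'I_n) : 1 < n -> ordS x != x.
Proof.
move=> hn; apply/eqP => /(congr1 val) /=; move: (ltn_ord x) => hx.
have h2 : x.+1 < 2 * n by mlia.
rewrite -addn1 (mod2 (n:=n)) ?addn1 //; case: ifP => ? ?; mlia.
Qed.

Lemma SI_nonempty k (B : {set {set 'I_(2 * k.+1)}}) :
  0 < k -> is_blocker B -> SI B != set0.
Proof.
move=> k0 hB; apply/negP => /eqP hS.
have nb : forall i, bedge i \notin B.
  move=> i; apply/negP => hi; have : i \in SI B by rewrite inE.
  by rewrite hS inE.
have deg : forall v e f, e \in B -> f \in B -> v \in e -> v \in f -> e = f.
  by move=> v e f eB fB ve vf; apply: (star k0 hB (nb v)) => //; rewrite ?ve ?vf.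
have n1 : 1 < 2 * k.+1 by rewrite mulnS; mlia.
have hB0 := hB; case: hB0 => [[hBe _] hc].
have : 0 < #|B| by rewrite hc.
rewrite card_gt0 => /set0Pn [e eB].
case/edgeP: (hBe e eB) => p [q [pq ep]].
have notin : ordS p \notin cover B.
  apply/negP => /bigcupP [f fB hf].
  have ef : e = f.
    by apply: (star k0 hB (nb p)) => //; rewrite ?ep ?inE ?eqxx ?hf ?orbT.
  subst f; move: hf; rewrite ep !inE => /orP[] /eqP h.
  - by move: (ordS_neq p n1); rewrite h eqxx.
  - by move: (nb p); rewrite /bedge h -ep eB.
have triv : trivIset B.
  apply/trivIsetP => A A' AB A'B nAA'; rewrite disjoints_subset; apply/subsetP => x xA.
  rewrite inE; apply/negP => xA'; by move/eqP: nAA'; apply; apply: (deg x).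
have := (leq_card_cover B).2; rewrite triv => /eqP hcov.
rewrite (eq_bigr (fun _ => 2)) ?sum_nat_const in hcov; last first.
  by move=> A AB; apply/eqP; apply: hBe.
have : #|cover B| <= #|[set~ ordS p]|.
  apply: subset_leq_card; apply/subsetP => x hx; rewrite !inE; apply/eqP => hxp.
  by move: notin; rewrite -hxp hx.
rewrite cardsC1 card_ord hcov hc => h; mlia.
Qed.

Lemma vshift_rs n (a : 'I_n) k : vshift a k = rs k a.
Proof. by []. Qed.

Lemma rs_nat n s (x : 'I_n) : nat_of_ord (rs s x) = (x + s) %% n.
Proof. exact: rs_val. Qed.

Lemma modK K a i : a < K -> i < K -> (i + K - a) %% K = if a <= i then i - a else i + K - a.
Proof.
move=> ha hi; have h : i + K - a < 2 * K by mlia.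
rewrite (mod2 h); case: ifP => h1; case: ifP => h2 //; mlia.
Qed.

Lemma memInt n (a i : 'I_n) t : t <= n ->
  (i \in [set vshift a j | j : 'I_t]) = ((i + n - a) %% n < t).
Proof.
move=> tn; move: (ltn_ord a) (ltn_ord i) => ha hi; rewrite modK //.
apply/imsetP/idP => [[j _ ->]|h].
- rewrite vshift_rs rs_nat; move: (ltn_ord j) => hj.
  have h2 : a + j < 2 * n by mlia.
  rewrite (mod2 h2); split_ifs; mlia.
- have hj : (if a <= i then i - a else i + n - a) < t by [].
  exists (Ordinal hj) => //; apply: val_inj; rewrite vshift_rs /= rs_nat /=.
  have h2 : a + (if a <= i then i - a else i + n - a) < 2 * n by case: ifP => ?; mlia.
  rewrite (mod2 h2); split_ifs; mlia.
Qed.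

Lemma bnd_SI n (B : {set {set 'I_n}}) : [set e in B | is_boundary e] = @bedge n @: SI B.
Proof.
apply/setP => e; rewrite inE; apply/andP/imsetP => [[eB /existsP[i /eqP ei]]|[i iS ->]].
- by exists i => //; rewrite inE -ei.
- split; first by rewrite inE in iS.
  by apply/existsP; exists i.
Qed.

Lemma conclE n (B : {set {set 'I_n}}) (a : 'I_n) t : 2 < n ->
  ([set e in B | is_boundary e] = [set bedge (vshift a k) | k : 'I_t]) <->
  (SI B = [set vshift a k | k : 'I_t]).
Proof.
move=> n2; rewrite bnd_SI.
have -> : [set bedge (vshift a k) | k : 'I_t] = @bedge n @: [set vshift a k | k : 'I_t].
  by rewrite -imset_comp.
split; last by move=> ->.
by apply: imset_inj; apply: bedge_inj.
Qed.

Definition Pk k := forall B : {set {set 'I_(2 * k)}}, is_blocker B ->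
  exists (a : 'I_(2 * k)) (t : nat),
    [/\ 2 <= t, t <= k & [set e in B | is_boundary e] = [set bedge (vshift a j) | j : 'I_t]].

Lemma lo_proof k : (2 * k).-1 < 2 * k.+1. Proof. rewrite mulnS; mlia. Qed.
Definition lo k : 'I_(2 * k.+1) := Ordinal (lo_proof k).
Lemma z0_proof k : 0 < 2 * k.+1. Proof. rewrite mulnS; mlia. Qed.
Definition z0 k : 'I_(2 * k.+1) := Ordinal (z0_proof k).

Lemma ordS_lo k : 0 < k -> ordS (lo k) = hi1 k.
Proof.
move=> k0; apply: val_inj => /=; rewrite modn_small; first by mlia.
rewrite mulnS; mlia.
Qed.

Lemma ordS_hi2 k : ordS (hi2 k) = z0 k.
Proof.
apply: val_inj => /=; have -> : (2 * k).+2 = 2 * k.+1 by rewrite mulnS; mlia.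
by rewrite modnn.
Qed.

Lemma SI_pull k (B : {set {set 'I_(2 * k.+1)}}) (j : 'I_(2 * k)) :
  j.+1 < 2 * k -> (j \in SI (pull B)) = (W j \in SI B).
Proof.
move=> hj; rewrite !inE /bedge imset_set2.
have -> : W (ordS j) = ordS (W j).
  apply: val_inj => /=; rewrite (modn_small hj) modn_small //.
  by apply: leq_trans hj (le2k k).
by [].
Qed.

Lemma SI_pull_last k (B : {set {set 'I_(2 * k.+1)}}) (j : 'I_(2 * k)) :
  j.+1 = 2 * k -> (j \in SI (pull B)) = ([set W j; z0 k] \in B).
Proof.
move=> hj; rewrite !inE /bedge imset_set2.
have -> : W (ordS j) = z0 k by apply: val_inj => /=; rewrite hj modnn.
by [].
Qed.

Lemma ltn_ord2 k (i : 'I_(2 * k.+1)) : (i : nat) < (2 * k).+2.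
Proof. have e : 2 * k.+1 = (2 * k).+2 by rewrite mulnS; mlia. exact: leq_trans (ltn_ord i) (eq_leq e). Qed.

Lemma frame k (B : {set {set 'I_(2 * k.+1)}}) : Pk k -> 1 < k -> is_blocker B ->
  lo k \in SI B -> hi1 k \notin SI B ->
  (exists t, [/\ 2 <= t, t <= k.+1 &
     forall i : 'I_(2 * k.+1), (i \in SI B) = (2 * k - t <= i <= (2 * k).-1)])
  \/ ((forall i : 'I_(2 * k.+1), nat_of_ord i = (2 * k).-2 -> i \notin SI B) /\
      exists p r : 'I_(2 * k.+1),
        [/\ ordS p = r, p \in SI B, r \in SI B, ordS r \notin SI B & r.+1 < (2 * k).-1]).
Proof.
move=> IH k1 hB hlo0 nhi0.
have k0 : 0 < k by mlia.
have hlo : bedge (lo k) \in B by rewrite inE in hlo0.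
have nhi : bedge (hi1 k) \notin B by rewrite inE in nhi0.
have lotouch : (hi1 k \in bedge (lo k)) || (ordS (hi1 k) \in bedge (lo k)).
  by rewrite /bedge ordS_lo // !inE eqxx orbT.
have f1 : forall e, e \in B -> (hi1 k \in e) || (hi2 k \in e) -> e = bedge (lo k).
  move=> e eB he; apply: (star k0 hB nhi) => //; by rewrite ordS_hi1.
have hP : is_blocking_set (pull B) by apply: pull_blocking; [case: hB | rewrite top_bedge].
have hPc : #|pull B| = k.
  have hT : [set e in B | (hi1 k \in e) || (hi2 k \in e)] = [set bedge (lo k)].
    apply/setP => e; rewrite !inE; apply/andP/eqP => [[eB he]|->]; first exact: f1.
    by split => //; rewrite -ordS_hi1.
  have := pull_card B; rewrite hT cards1 (proj2 hB) => h; mlia.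
case: (IH (pull B) (conj hP hPc)) => a' [t' [ht1 ht2 heq]].
have n2 : 2 < 2 * k by mlia.
move/(conclE _ _ _ n2): heq => hSI.
have ha' := ltn_ord a'.
have hform : forall j : 'I_(2 * k),
    (j \in SI (pull B)) = ((if a' <= j then j - a' else j + 2 * k - a') < t').
  move=> j; rewrite hSI memInt ?modK //; mlia.
have nhi2 : bedge (hi2 k) \notin B.
  apply/negP => h2; have := f1 _ h2; rewrite !inE eqxx orbT => /(_ isT).
  move/(bedge_inj (n := 2 * k.+1)) => /(_ _) /(congr1 val) /=.
  by move=> /(_ ltac:(rewrite mulnS; mlia)) => ?; mlia.
have n21 : 2 * k.+1 = (2 * k).+2 by rewrite mulnS; mlia.
have SIform : forall i : 'I_(2 * k.+1), (i \in SI B) =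
    if i < (2 * k).-1 then ((if a' <= i then i - a' else i + 2 * k - a') < t')
    else (nat_of_ord i == (2 * k).-1).
  move=> i; case: ifP => hi.
  - have hi' : i < 2 * k by mlia.
    have -> : i = W (Ordinal hi') by apply: val_inj.
    rewrite -SI_pull ?hform //=; mlia.
  - case: (eqVneq (nat_of_ord i) (2 * k).-1) => h1.
      have -> : i = lo k by apply: val_inj.
      by rewrite inE hlo.
    case: (eqVneq (nat_of_ord i) (2 * k)) => h2.
      have -> : i = hi1 k by apply: val_inj.
      by rewrite inE (negbTE nhi).
    have -> : i = hi2 k by apply: val_inj => /=; move: (ltn_ord2 i) => ?; mlia.
    by rewrite inE (negbTE nhi2).
have hl1 : (2 * k).-1 < 2 * k by mlia.
have Wl : W (Ordinal hl1) = lo k by apply: val_inj.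
have hl : ((Ordinal hl1) \in SI (pull B)) = ([set lo k; z0 k] \in B).
  by rewrite SI_pull_last ?Wl //=; mlia.
have Fl := hform (Ordinal hl1); rewrite /= in Fl.
case: (boolP ([set lo k; z0 k] \in B)) => hz.
- have nz : bedge (z0 k) \notin B.
    apply/negP => hbz.
    have : [set lo k; z0 k] = bedge (z0 k).
      by apply: (star k0 hB nhi2) => //; rewrite ordS_hi2 !inE eqxx ?orbT.
    move/setP/(_ (lo k)); rewrite /bedge !inE eqxx /= => /esym /orP[] /eqP /(congr1 val) /=.
    + by move=> ?; mlia.
    + rewrite modn_small; first by move=> ?; mlia.
      by rewrite mulnS; mlia.
  have F0 : (z0 k \in SI B) = false by rewrite inE (negbTE nz).
  rewrite SIform /= in F0; move/negbT: F0 => F0.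
  rewrite hl hz in Fl; move/esym: Fl => Fl.
  left; exists t'; split => //; first by mlia.
  move=> i; rewrite SIform; move: Fl F0 (ltn_ord2 i) ht1 ht2 ha'; blia.
- rewrite hl (negbTE hz) in Fl; move/esym/negbT: Fl => Fl.
  case: (eqVneq (a' + t') (2 * k).-1) => hat.
  + left; exists t'.+1; split => //; try mlia.
    move=> i; rewrite SIform; move: Fl hat (ltn_ord2 i) ht1 ht2 ha'; blia.
  + have hat2 : a' + t' < (2 * k).-1 by move: Fl hat ha' ht1 ht2; blia.
    right; split.
    * move=> i hi; rewrite SIform hi; move: Fl hat2 ht1 ht2 ha'; blia.
    * have hp : a' + t' - 2 < 2 * k.+1 by rewrite mulnS; mlia.
      have hr : a' + t' - 1 < 2 * k.+1 by rewrite mulnS; mlia.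
      exists (Ordinal hp), (Ordinal hr); split.
      -- apply: val_inj => /=; rewrite modn_small; mlia.
      -- rewrite SIform /=; move: Fl hat2 ht1 ht2 ha'; blia.
      -- rewrite SIform /=; move: Fl hat2 ht1 ht2 ha'; blia.
      -- have hr1 : nat_of_ord (ordS (Ordinal hr)) = a' + t'.
           rewrite /= modn_small; mlia.
         rewrite SIform hr1; move: Fl hat2 ht1 ht2 ha'; blia.
      -- rewrite /=; mlia.
Qed.

Lemma base_frame (B : {set {set 'I_(2 * 2)}}) : is_blocker B ->
  lo 1 \in SI B -> hi1 1 \notin SI B ->
  forall i : 'I_(2 * 2), (i \in SI B) = (i <= 1).
Proof.
move=> hB hlo nhi; rewrite !inE in hlo nhi.
have e0 : is_edge (bedge (z0 1)).
  by have h := ordS_neq (z0 1) isT; rewrite eq_sym in h; rewrite /is_edge cards2 h.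
have e1 : is_edge (bedge (hi1 1)).
  by have h := ordS_neq (hi1 1) isT; rewrite eq_sym in h; rewrite /is_edge cards2 h.
have ne : bedge (z0 1) != bedge (hi1 1).
  by apply/negP => /eqP /(bedge_inj (n := 2 * 2) isT) /(congr1 val).
have hM : is_SPM [set bedge (z0 1); bedge (hi1 1)].
  apply/and3P; split.
  - by apply/forall_inP => e; rewrite !inE => /orP[] /eqP ->.
  - by rewrite cards2 ne.
  - have hd : edges_disjoint (bedge (z0 1)) (bedge (hi1 1)).
      rewrite /edges_disjoint /bedge ordS_hi1 /= crossingE //.
      apply/andP; split; last by [].
      rewrite disjoints_subset; apply/subsetP => x; rewrite !inE.
      by case/orP => /eqP ->.
    apply/forall_inP => e; rewrite !inE => /orP[] /eqP ->;
    apply/forall_inP => f; rewrite !inE => /orP[] /eqP ->; rewrite ?eqxx ?hd ?implybT //; by rewrite edges_disjointC hd implybT.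
case: hB => [[hBe hb] hc].
case: (hb _ hM) => e eB; rewrite !inE => /orP[] /eqP he; last by rewrite -he eB in nhi.
have hz : z0 1 \in SI B by rewrite inE -he.
have hl : lo 1 \in SI B by rewrite inE.
move=> i; apply/idP/idP => hi; last first.
  have : (i : nat) \in [:: 0; 1] by rewrite !inE; move: hi; case: (nat_of_ord i) => [|[|]].
  rewrite !inE => /orP[] /eqP hv.
  - have -> : i = z0 1 by apply: val_inj; exact: hv.
    by rewrite inE in hz.
  - have -> : i = lo 1 by apply: val_inj; exact: hv.
    by rewrite inE in hl.
rewrite leqNgt; apply/negP => hi2.
have : #|[set z0 1; lo 1; i]| <= #|B|.
  apply: leq_trans _ (card_SI B isT); apply: subset_leq_card; apply/subsetP => x.
  rewrite !inE in hz hl hi *; by case/orP => [/orP[]|] /eqP ->.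
have -> : [set z0 1; lo 1; i] = i |: (z0 1 |: [set lo 1]).
  by apply/setP => x; rewrite !inE; case: (x == z0 1); case: (x == lo 1); case: (x == i).
rewrite hc !cardsU1 cards1 !inE.
have n3 : (z0 1 == lo 1) = false by [].
have n1 : (i == z0 1) = false by apply/negP => /eqP /(congr1 val) /= h; rewrite h in hi2.
have n2 : (i == lo 1) = false by apply/negP => /eqP /(congr1 val) /= h; rewrite h in hi2.
by rewrite n1 n2 n3.
Qed.

Lemma Int_rs n s (a x : 'I_n) t :
  (rs s x \in [set vshift (rs s a) j | j : 'I_t]) = (x \in [set vshift a j | j : 'I_t]).
Proof.
have -> : [set vshift (rs s a) j | j : 'I_t] = rs s @: [set vshift a j | j : 'I_t].
  rewrite -imset_comp; apply: eq_imset => j /=.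
  by rewrite !vshift_rs !rs_add addnC.
by rewrite mem_imset //; apply: rs_inj.
Qed.

Lemma ordS_lo_val k (y : 'I_(2 * k.+1)) : 0 < k -> ordS y = lo k -> nat_of_ord y = (2 * k).-2.
Proof.
move=> k0 /(congr1 val) /=; move: (ltn_ord2 y) => hy.
rewrite modS_small ?ltn_ord //; case: eqP => ? ?; mlia.
Qed.

Lemma step k : 0 < k -> (1 < k -> Pk k) -> Pk k.+1.
Proof.
move=> k0 IH B hB.
have n2 : 2 < 2 * k.+1 by rewrite mulnS; mlia.
have hne := SI_nonempty k0 hB.
have hnT : SI B != setT.
  apply/negP => /eqP hT; have := card_SI B n2; rewrite hT cardsT card_ord (proj2 hB) => h.
  rewrite mulnS in h; mlia.
case: (run_end hne hnT) => i [iS niS].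
case: (rs_to i (lo k)) => s hs.
have hB1 : is_blocker (mapE (rs s) B) by apply: rot_blocker.
have lo1 : lo k \in SI (mapE (rs s) B) by rewrite -hs SI_rs.
have hi1n : hi1 k \notin SI (mapE (rs s) B) by rewrite -ordS_lo // -hs -rs_ordS SI_rs.
have Hi : exists t, [/\ 2 <= t, t <= k.+1 & forall j : 'I_(2 * k.+1),
    (j \in SI (mapE (rs s) B)) = (2 * k - t <= j <= (2 * k).-1)].
  case: (ltnP 1 k) => k1.
  - case: (frame (IH k1) k1 hB1 lo1 hi1n) => // [[hn4 [p [r [hpr pS rS nrS hr]]]]].
    exfalso.
    case: (rs_to r (lo k)) => s2 hs2.
    have hB2 : is_blocker (mapE (rs s2) (mapE (rs s) B)) by apply: rot_blocker.
    have lo2 : lo k \in SI (mapE (rs s2) (mapE (rs s) B)) by rewrite -hs2 SI_rs.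
    have hi2n : hi1 k \notin SI (mapE (rs s2) (mapE (rs s) B)).
      by rewrite -ordS_lo // -hs2 -rs_ordS SI_rs.
    have rlo : r != lo k by apply/eqP => /(congr1 val) /= ?; mlia.
    case: (frame (IH k1) k1 hB2 lo2 hi2n) => [[t [ht1 ht2 hf]]|[hn4' _]].
    + have x0S : rs s2 (lo k) \in SI (mapE (rs s2) (mapE (rs s) B)) by rewrite SI_rs.
      have x0n : rs s2 (lo k) != lo k by rewrite -{2}hs2 (inj_eq (@rs_inj _ s2)) eq_sym.
      have x1n : ordS (rs s2 (lo k)) \notin SI (mapE (rs s2) (mapE (rs s) B)).
        by rewrite -rs_ordS ordS_lo // SI_rs.
      rewrite hf in x0S; rewrite hf in x1n.
      have hv : nat_of_ord (rs s2 (lo k)) != (2 * k).-1.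
        by apply: contra x0n => /eqP h; apply/eqP; apply: val_inj.
      move: x1n; rewrite /= modn_small; last first.
        move: x0S; blia.
      move: x0S hv; blia.
    + have hv : nat_of_ord (rs s2 p) = (2 * k).-2.
        by apply: ordS_lo_val => //; rewrite -rs_ordS hpr hs2.
      by move: (hn4' _ hv); rewrite SI_rs pS.
  - have k1' : k = 1 by mlia.
    subst k; exists 2; split => // j.
    by rewrite (base_frame hB1 lo1 hi1n).
case: Hi => t [ht1 ht2 hf].
have hT : 2 * k - t < 2 * k.+1 by rewrite mulnS; mlia.
exists (rs (s * (2 * k.+1) - s) (Ordinal hT)), t; split => //.
apply/(conclE _ _ _ n2)/setP => j.
rewrite -(SI_rs s) -(Int_rs s) rs_back' memInt; last by rewrite mulnS; mlia.
rewrite hf modK ?ltn_ord //=; move: (ltn_ord2 (rs s j)) ht1 ht2; blia.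
Qed.

Lemma main m : 2 <= m -> Pk m.
Proof.
elim: m => // m IHm hm; apply: step; first by mlia.
by move=> h; apply: IHm.
Qed.

Theorem lemma3p2 (m : nat) (B : {set {set 'I_(2 * m)}}) :
  2 <= m -> is_blocker B ->
  exists (a : 'I_(2 * m)) (t : nat),
    [/\ 2 <= t, t <= m &
        [set e in B | is_boundary e] = [set bedge (vshift a k) | k : 'I_t]].
Proof. by move=> hm hB; apply: (main hm). Qed.
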